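(* Let $S$ be a discrete random variable (the hidden hypothesis) with finite domain $\mathrm{dom}(S)$. Let $O_1,\dots,O_N$ be random variables with finite discrete domains (the observations), and let $O^1,\dots,O^K$ ($K\ge 0$) be further observation random variables (the past observations), each with a finite discrete domain. Assume that all of $O_1,\dots,O_N,O^1,\dots,O^K$ are mutually conditionally independent given $S$. Assume the uniform observation entropy (UOE) property: for every $s\in\mathrm{dom}(S)$ with $P(S=s)>0$ and all $i,j\in\{1,\dots,N\}$, $$H(O_i\mid S=s)=H(O_j\mid S=s).$$ Fix values $o^1,\dots,o^K$ such that the event $O^{-}:=\{O^1=o^1,\dots,O^K=o^K\}$ has positive probability. Then the set of maximizers of $I(S,O'\mid O^{-})$ over $O'\in\{O_1,\dots,O_N\}$ equals the set of maximizers of $H(O'\mid O^{-})$ over $O'\in\{O_1,\dots,O_N\}$, that is, $$\operatorname{argmax}_{O'\in\{O_1,\dots,O_N\}} I(S,O'\mid O^{-})=\operatorname{argmax}_{O'\in\{O_1,\dots,O_N\}} H(O'\mid O^{-}).$$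
   Context: All information-theoretic quantities conditioned on the event $O^{-}$ are computed under the probability measure conditioned on $O^{-}$. In particular: - $H(O'\mid O^{-})$ is the entropy of $O'$ under $P(\cdot\mid O^{-})$; - $H(O'\mid S,O^{-})=\sum_s P(S=s\mid O^{-})\,H(O'\mid S=s,O^{-})$; - $I(S,O'\mid O^{-})$ is the mutual information between $S$ and $O'$ under $P(\cdot\mid O^{-})$. The generative model is: $s\sim P(S)$, and given $S=s$ each observation $o_i\sim P(O_i\mid S=s)$. *)

(* Defs.v *)
From mathcomp Require Import all_boot all_order all_algebra.
From mathcomp Require Import reals exp.
Set Implicit Arguments. Unset Strict Implicit. Unset Printing Implicit Defensive.
Import Order.TTheory GRing.Theory Num.Theory.
Local Open Scope ring_scope.

(* Shannon entropy (in nats) of a finitely supported mass function f;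
   the convention 0 * ln 0 = 0 holds automatically. *)
Definition entropy (R : realType) (T : finType) (f : T -> R) : R :=
  - \sum_(x : T) f x * ln (f x).

(* Generative model:
   p : T -> R                          prior of the hidden hypothesis S on dom(S)=T;
   lik i s o = P(O_i = o | S = s)      for observations O_i : D i, i < N;
   q k s e   = P(O^k = e | S = s)      for past observations O^k : E k, k < K;
   ok k      = the fixed observed value o^k.
   Given S, all O_i and O^k are drawn independently. *)

Definition past_lik (R : realType) (T : finType) (K : nat) (E : 'I_K -> finType)
  (q : forall k : 'I_K, T -> E k -> R) (ok : forall k : 'I_K, E k) (s : T) : R :=
  \prod_(k < K) q k s (ok k).

Definition P_past (R : realType) (T : finType) (p : T -> R) (K : nat)
  (E : 'I_K -> finType) (q : forall k : 'I_K, T -> E k -> R)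
  (ok : forall k : 'I_K, E k) : R :=
  \sum_(s : T) p s * past_lik q ok s.

(* P(S = s, O_i = o | O^-) = P(S=s) P(O_i=o|S=s) P(O^-|S=s) / P(O^-)
   (the other observations are marginalized out). *)
Definition P_SO_past (R : realType) (T : finType) (p : T -> R) (N : nat)
  (D : 'I_N -> finType) (lik : forall i : 'I_N, T -> D i -> R) (K : nat)
  (E : 'I_K -> finType) (q : forall k : 'I_K, T -> E k -> R)
  (ok : forall k : 'I_K, E k) (i : 'I_N) (s : T) (o : D i) : R :=
  p s * lik i s o * past_lik q ok s / P_past p q ok.

Arguments P_SO_past {R T} p {N D} lik {K E} q ok i s o.

Definition P_S_past (R : realType) (T : finType) (p : T -> R) (K : nat)
  (E : 'I_K -> finType) (q : forall k : 'I_K, T -> E k -> R)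
  (ok : forall k : 'I_K, E k) (s : T) : R :=
  p s * past_lik q ok s / P_past p q ok.

Definition P_O_past (R : realType) (T : finType) (p : T -> R) (N : nat)
  (D : 'I_N -> finType) (lik : forall i : 'I_N, T -> D i -> R) (K : nat)
  (E : 'I_K -> finType) (q : forall k : 'I_K, T -> E k -> R)
  (ok : forall k : 'I_K, E k) (i : 'I_N) (o : D i) : R :=
  \sum_(s : T) P_SO_past p lik q ok i s o.

Arguments P_O_past {R T} p {N D} lik {K E} q ok i o.

Definition condH (R : realType) (T : finType) (p : T -> R) (N : nat)
  (D : 'I_N -> finType) (lik : forall i : 'I_N, T -> D i -> R) (K : nat)
  (E : 'I_K -> finType) (q : forall k : 'I_K, T -> E k -> R)
  (ok : forall k : 'I_K, E k) (i : 'I_N) : R :=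
  entropy (P_O_past p lik q ok i).

Definition condMI (R : realType) (T : finType) (p : T -> R) (N : nat)
  (D : 'I_N -> finType) (lik : forall i : 'I_N, T -> D i -> R) (K : nat)
  (E : 'I_K -> finType) (q : forall k : 'I_K, T -> E k -> R)
  (ok : forall k : 'I_K, E k) (i : 'I_N) : R :=
  \sum_(s : T) \sum_(o : D i)
     P_SO_past p lik q ok i s o *
     ln (P_SO_past p lik q ok i s o /
         (P_S_past p q ok s * P_O_past p lik q ok i o)).

Definition argmax (R : realType) (N : nat) (f : 'I_N -> R) : {set 'I_N} :=
  [set i : 'I_N | [forall j : 'I_N, f j <= f i]].

(* Main.v *)
Require Import Defs.
From mathcomp Require Import all_boot all_order all_algebra.
From mathcomp Require Import reals exp.
From mathcomp Require Import ring lra.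
Import Order.TTheory GRing.Theory Num.Theory.
Local Open Scope ring_scope.

Lemma key (R : realType) (T D : finType) (w : T -> R) (l : T -> D -> R)
  (J : T -> D -> R) (PO : D -> R)
  (hw : forall s, 0 <= w s) (hl : forall s, 0 < w s -> forall o, 0 <= l s o)
  (hJ : forall s o, J s o = w s * l s o)
  (hPO : forall o, PO o = \sum_s J s o) :
  \sum_s \sum_o J s o * ln (J s o / (w s * PO o))
  = entropy PO - \sum_s w s * entropy (l s).
Proof.
have term : forall s o, J s o * ln (J s o / (w s * PO o)) =
   w s * (l s o * ln (l s o)) - J s o * ln (PO o).
  move=> s o; rewrite hJ.
  have [->|wne] := eqVneq (w s) 0; first by rewrite !mul0r subr0.
  have wp : 0 < w s by rewrite lt0r wne hw.
  have [->|lne] := eqVneq (l s o) 0; first by rewrite !(mulr0, mul0r) subr0.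
  have lp : 0 < l s o by rewrite lt0r lne hl.
  have POp : 0 < PO o.
    rewrite hPO (bigD1 s) //= hJ; apply: ltr_wpDr; last exact: mulr_gt0.
    apply: sumr_ge0 => t _; rewrite hJ.
    have [->|wtne] := eqVneq (w t) 0; first by rewrite mul0r.
    have wtp : 0 < w t by rewrite lt0r wtne hw.
    exact: mulr_ge0 (hw t) (hl t wtp o).
  have -> : w s * l s o / (w s * PO o) = l s o / PO o.
    by field; apply/andP; split; rewrite gt_eqF.
  rewrite ln_div ?posrE //; ring.
under eq_bigr do under eq_bigr do rewrite term.
rewrite /entropy.
under eq_bigr do rewrite sumrB -mulr_sumr.
rewrite sumrB exchange_big /=.
have -> : \sum_j \sum_i J i j * ln (PO j) = \sum_j PO j * ln (PO j).
  by apply: eq_bigr => j _; rewrite -mulr_suml -hPO.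
under [X in _ = _ - X]eq_bigr do rewrite mulrN.
rewrite sumrN opprK addrC //.
Qed.

Theorem theorem1 (R : realType) (T : finType) (p : T -> R)
  (N : nat) (D : 'I_N -> finType) (lik : forall i : 'I_N, T -> D i -> R)
  (K : nat) (E : 'I_K -> finType) (q : forall k : 'I_K, T -> E k -> R)
  (ok : forall k : 'I_K, E k)
  (* P(S) is a probability distribution on dom(S) *)
  (hp0 : forall s, 0 <= p s) (hp1 : \sum_(s : T) p s = 1)
  (* P(O_i | S = s) is a distribution (for s of positive probability) *)
  (hlik0 : forall i s o, 0 < p s -> 0 <= lik i s o)
  (hlik1 : forall i s, 0 < p s -> \sum_(o : D i) lik i s o = 1)
  (* P(O^k | S = s) is a distribution (for s of positive probability) *)
  (hq0 : forall k s e, 0 < p s -> 0 <= q k s e)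
  (hq1 : forall k s, 0 < p s -> \sum_(e : E k) q k s e = 1)
  (* uniform observation entropy: H(O_i | S = s) = H(O_j | S = s) *)
  (huoe : forall s, 0 < p s -> forall i j : 'I_N,
            entropy (lik i s) = entropy (lik j s))
  (* the past-observation event O^- has positive probability *)
  (hpast : 0 < P_past p q ok) :
  argmax (condMI p lik q ok) = argmax (condH p lik q ok).
Proof.
set w := P_S_past p q ok.
have wpos : forall s, 0 < w s -> 0 < p s.
  move=> s ws; rewrite lt0r hp0 andbT; apply/negP => /eqP ps0.
  by move: ws; rewrite /w /P_S_past ps0 !mul0r ltxx.
have w0 : forall s, 0 <= w s.
  move=> s; rewrite /w /P_S_past.
  have [ps0|ps] := eqVneq (p s) 0; first by rewrite ps0 !mul0r.
  have psp : 0 < p s by rewrite lt0r ps hp0.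
  apply: divr_ge0; last exact: ltW.
  apply: mulr_ge0 => //; apply: prodr_ge0 => k _; exact: hq0.
have hMI : forall i, condMI p lik q ok i = condH p lik q ok i - \sum_s w s * entropy (lik i s).
  move=> i; rewrite /condMI /condH; apply: key => //.
  - by move=> s ws o; apply: hlik0; apply: wpos.
  - move=> s o; rewrite /w /P_SO_past /P_S_past.
    move: (p s) (lik i s o) (past_lik q ok s) (P_past p q ok) => a b c d.
    by rewrite -!mulrA; congr (_ * _); rewrite mulrC mulrA.
have hC : forall i j, \sum_s w s * entropy (lik i s) = \sum_s w s * entropy (lik j s).
  move=> i j; apply: eq_bigr => s _.
  have [->|wne] := eqVneq (w s) 0; first by rewrite !mul0r.
  have wp : 0 < w s by rewrite lt0r wne w0.
  by rewrite (huoe s (wpos s wp) i j).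
apply/setP => i; rewrite !inE; apply: eq_forallb => j.
by rewrite !hMI (hC j i) lerD2r.
Qed.
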